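(* Let $g,h\in K\{\{x,y\}$ with $\mathrm{ord}_x(g)\ge1$. Then there is a unique $K$-algebra homomorphism $\varphi=\varphi_{(g,h)}:K\{\{x,y\}\to K\{\{x,y\}$ (i.e. a $K$-linear map with $\varphi(1_P)=1_P$ and $\varphi(f_1\cdot\ldots\cdot f_m)=\varphi(f_1)\cdot\ldots\cdot\varphi(f_m)$ for all $m\ge2$) such that $\varphi(x)=g$, $\varphi(y)=h$, and $\varphi$ is continuous with respect to the $x$-adic topology.
   Context: Let $K$ be a field and let $x\neq y$ be two symbols (variables). A finite planar reduced rooted tree is a finite rooted tree in which the children of each vertex are linearly ordered and no vertex has exactly one child; its leaves are the vertices without children (the one-vertex tree has its root as its unique leaf). $P(x,y)$ denotes the set of isomorphism classes of pairs $S=(T,\lambda)$ with $T$ a finite planar reduced rooted tree and $\lambda:L(T)\to\{x,y\}$ a labeling of its set of leaves $L(T)$; $\deg_x(S)=\#\lambda^{-1}(x)$, $\deg_y(S)=\#\lambda^{-1}(y)$, $\deg(S)=\#L(T)$. Let $P'(x,y)=P(x,y)\cup\{1_P\}$, where $1_P$ represents the empty tree (with $\deg_x(1_P)=\deg_y(1_P)=0$). For $m\ge 2$ and $S_1,\dots,S_m\in P(x,y)$, the $m$-ary grafting $\bullet_m(S_1,\dots,S_m)$ is the labeled tree obtained by adding a new root whose ordered children are the roots of $S_1,\dots,S_m$ (in this order), with the labelings inherited. It is extended to $P'(x,y)$ by deleting occurrences of $1_P$: $\bullet_m(S_1,\dots,S_m)=\bullet_{r}(S_{j_1},\dots,S_{j_r})$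 where $S_{j_1},\dots,S_{j_r}$ are the entries different from $1_P$ (in order), with the conventions $\bullet_1(S)=S$ and $\bullet_0()=1_P$. $K\{\{x,y\}$ is the $K$-vector space of all functions $f:P'(x,y)\to K$, $S\mapsto c_S(f)$, such that for every $n\in\mathbb N$ the set $\{S: c_S(f)\ne0,\ \deg_x(S)=n\}$ is finite; one writes $f=\sum_S c_S(f)S$ and identifies $S\in P'(x,y)$ with its indicator function (so $x$ and $y$ denote the one-vertex trees labeled $x$, resp. $y$). For $m\ge2$, the product $\bullet_m(f_1,\dots,f_m)=f_1\cdot\ldots\cdot f_m$ is defined by $c_S(f_1\cdot\ldots\cdot f_m)=\sum c_{S_1}(f_1)\cdots c_{S_m}(f_m)$, summed over all $(S_1,\dots,S_m)\in P'(x,y)^m$ with $\bullet_m(S_1,\dots,S_m)=S$. For $f\ne0$, $\mathrm{ord}_x(f)=\min\{\deg_x(S): c_S(f)\neq 0\}$, and $\mathrm{ord}_x(0)=\infty$; $|f|_x=(1/2)^{\mathrm{ord}_x(f)}$ (with $|0|_x=0$), and the $x$-adic distance/topology is given by $|f-g|_x$. *)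

(* Defs.v *)
From HB Require Import structures.
From mathcomp Require Import all_boot all_algebra.
From Stdlib Require List.
Set Implicit Arguments. Unset Strict Implicit. Unset Printing Implicit Defensive.
Import GRing.Theory.
Local Open Scope ring_scope.

Inductive lab := X | Y.

Definition lab_code (l : lab) : bool := if l is X then true else false.
Definition lab_decode (b : bool) : lab := if b then X else Y.
Lemma lab_codeK : cancel lab_code lab_decode. Proof. by case. Qed.
HB.instance Definition _ := Countable.copy lab (can_type lab_codeK).

(* Finite planar REDUCED rooted trees with leaves labelled by x or y, up to
   isomorphism.  A non-leaf vertex has the ordered list of children
   [:: t1, t2 & ts], i.e. at least two children, so reducedness is built in. *)
Inductive ltree :=
| LLeaf : lab -> ltree
| LNode : ltree -> ltree -> seq ltree -> ltree.

Fixpoint tree_encode (t : ltree) : GenTree.tree lab :=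
  match t with
  | LLeaf l => GenTree.Leaf l
  | LNode a b ts => GenTree.Node 0 (tree_encode a :: tree_encode b :: map tree_encode ts)
  end.

Fixpoint tree_decode (g : GenTree.tree lab) : ltree :=
  match g with
  | GenTree.Leaf l => LLeaf l
  | GenTree.Node _ (a :: b :: ts) => LNode (tree_decode a) (tree_decode b) (map tree_decode ts)
  | GenTree.Node _ _ => LLeaf X
  end.

Lemma tree_codeK : cancel tree_encode tree_decode.
Proof.
rewrite /cancel; fix IH 1; case=> [l|a b ts] //=; rewrite !IH; congr LNode.
elim: ts => //= t ts IHts; by rewrite IH IHts.
Qed.

HB.instance Definition _ := Countable.copy ltree (can_type tree_codeK).

(* P'(x,y) : None is the empty ltree 1_P. *)
Definition ptree := option ltree.

Fixpoint degx_tree (t : ltree) : nat :=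
  match t with
  | LLeaf X => 1
  | LLeaf Y => 0
  | LNode a b ts => degx_tree a + degx_tree b + sumn (map degx_tree ts)
  end.

Definition degx (S : ptree) : nat := if S is Some t then degx_tree t else 0.

Definition graft (ss : seq ptree) : ptree :=
  match pmap id ss with
  | [::] => None
  | [:: t] => Some t
  | a :: b :: ts => Some (LNode a b ts)
  end.

Fixpoint tuples_in (A : Type) (c : seq A) (m : nat) : seq (seq A) :=
  if m is m'.+1 then [seq a :: s | a <- c, s <- tuples_in c m'] else [:: [::]].

(* Every entry S_i of a tuple with graft = S is 1_P, S itself, or a child of
   the root of S; so these candidates suffice. *)
Definition candidates (S : ptree) : seq ptree :=
  match S with
  | None => [:: None]
  | Some (LLeaf l) => [:: None; Some (LLeaf l)]
  | Some (LNode a b ts) => None :: Some (LNode a b ts) :: map Some (a :: b :: ts)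
  end.

Definition decomps (m : nat) (S : ptree) : seq (seq ptree) :=
  undup [seq ss <- tuples_in (candidates S) m | graft ss == S].

Section Series.
Variable K : fieldType.

(* An element f of K{{x,y}} is a coefficient function P'(x,y) -> K with the
   finiteness condition. *)
Definition series (f : ptree -> K) : Prop :=
  forall n : nat, exists s : seq ptree,
    forall S, f S != 0 -> degx S = n -> S \in s.

Definition ind (S0 : ptree) : ptree -> K := fun S => (S == S0)%:R.
Definition one_s : ptree -> K := ind None.
Definition x_s : ptree -> K := ind (Some (LLeaf X)).
Definition y_s : ptree -> K := ind (Some (LLeaf Y)).

Definition mprod (fs : seq (ptree -> K)) : ptree -> K :=
  fun S => \sum_(ss <- decomps (size fs) S) \prod_(p <- zip fs ss) p.1 p.2.

Definition lincomb (a : K) (f g : ptree -> K) : ptree -> K :=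
  fun S => a * f S + g S.
Definition sub_s (f g : ptree -> K) : ptree -> K := fun S => f S - g S.

(* ord_x f >= n  (with ord_x 0 = oo), i.e. |f|_x <= (1/2)^n *)
Definition ordx_ge (f : ptree -> K) (n : nat) : Prop :=
  forall S, f S != 0 -> (n <= degx S)%N.

(* continuity of phi on K{{x,y}} for the x-adic topology, written with the
   basic x-adic balls {f : ord_x f >= n} *)
Definition xadic_continuous (phi : (ptree -> K) -> (ptree -> K)) : Prop :=
  forall f, series f -> forall n : nat, exists m : nat,
    forall g, series g -> ordx_ge (sub_s g f) m -> ordx_ge (sub_s (phi g) (phi f)) n.

Definition is_hom_gh (phi : (ptree -> K) -> (ptree -> K)) (g h : ptree -> K) : Prop :=
  (forall f, series f -> series (phi f)) /\
      (forall a f1 f2, series f1 -> series f2 ->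
         phi (lincomb a f1 f2) = lincomb a (phi f1) (phi f2)) /\
      phi one_s = one_s /\
      (forall fs : seq (ptree -> K), (2 <= size fs)%N ->
         (forall f, List.In f fs -> series f) ->
         phi (mprod fs) = mprod (map phi fs)) /\
      phi x_s = g /\ phi y_s = h /\
      xadic_continuous phi.

End Series.

(* Main.v *)
Require Import Defs.
From mathcomp Require Import all_boot all_algebra.
From mathcomp Require Import zify.
Set Implicit Arguments. Unset Strict Implicit. Unset Printing Implicit Defensive.
Import GRing.Theory.
Local Open Scope ring_scope.

Lemma mem_tuples_in (A : eqType) (c : seq A) m ss :
  (ss \in tuples_in c m) = (size ss == m) && all (fun a => a \in c) ss.
Proof.
elim: m ss => [|m IH] ss /=.
  by case: ss.
apply/allpairsPdep/idP.
  case=> a [s [ha hs ->]] /=; rewrite IH in hs; rewrite eqSS; case/andP: hs => -> ->; by rewrite ha.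
case: ss => [|a s] //=; rewrite eqSS => /and3P [hs ha hall].
by exists a, s; split => //; rewrite IH hs.
Qed.

Lemma uniq_tuples_in (A : eqType) (c : seq A) m : uniq c -> uniq (tuples_in c m).
Proof.
move=> uc; elim: m => [|m IH] //=.
apply: allpairs_uniq => // [[a s]] [b t] _ _ /=; by case=> -> ->.
Qed.

Lemma pmap_none (ss : seq ptree) : pmap id ss = [::] -> forall x, x \in ss -> x = None.
Proof.
elim: ss => [|[t|] ss IH] //= H x; rewrite in_cons => /orP [/eqP -> //|]; exact: IH.
Qed.

Lemma degx_graft ss : degx (graft ss) = sumn (map degx ss).
Proof.
have -> : sumn (map degx ss) = sumn (map degx_tree (pmap id ss)).
  elim: ss => [|[t|] ss IH] //=; by rewrite IH.
rewrite /graft; case: (pmap id ss) => [|a [|b ts]] //=; by rewrite ?addn0 ?addnA.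
Qed.

Lemma graft_inv ss : graft ss = None -> pmap id ss = [::].
Proof. by rewrite /graft; case: (pmap id ss) => [|a [|b ts]]. Qed.

Lemma mem_candidates ss S : graft ss = S -> forall x, x \in ss -> x \in candidates S.
Proof.
move=> <- x hx; case: x hx => [t|] hx; last first.
  by case: (graft ss) => [[l|a b ts]|].
have ht : t \in pmap id ss by rewrite mem_pmap; apply/mapP; exists (Some t).
rewrite /graft; move: ht; case: (pmap id ss) => [|a [|b ts]] //=.
  by rewrite mem_seq1 => /eqP ->; case: a => [l|a0 b ts]; rewrite !inE eqxx ?orbT.
move=> ht.
rewrite (_ : [:: None, _, _, _ & _] = [:: None; Some (LNode a b ts)] ++ map Some [:: a, b & ts]) //.
by rewrite mem_cat map_f ?orbT.
Qed.

Lemma mem_decomps m S ss : (ss \in decomps m S) = (size ss == m) && (graft ss == S).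
Proof.
rewrite /decomps mem_undup mem_filter mem_tuples_in.
case E : (graft ss == S); rewrite ?andbF //= andbT.
case: (size ss == m) => //=; apply/allP => x; apply: mem_candidates; exact/eqP.
Qed.

Lemma uniq_decomps m S : uniq (decomps m S).
Proof. exact: undup_uniq. Qed.

Lemma pmap_some (cs : seq ltree) : pmap id (map Some cs) = cs.
Proof. by elim: cs => //= c cs ->. Qed.

Lemma graft_some a b ts : graft (map Some (a :: b :: ts)) = Some (LNode a b ts).
Proof. by rewrite /graft pmap_some. Qed.

Lemma graft1 x : graft [:: x] = x.
Proof. by case: x. Qed.

Lemma degx_le_graft ss x : x \in ss -> (degx x <= degx (graft ss))%N.
Proof.
rewrite degx_graft; elim: ss => //= y ss IH; rewrite inE => /orP [/eqP ->|/IH].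
  exact: leq_addr.
by move/leq_trans; apply; apply: leq_addl.
Qed.

Section Gen.
Variable K : fieldType.
Implicit Types (f : ptree -> K) (fs : seq (ptree -> K)).

Definition prodz fs (ss : seq ptree) : K := \prod_(p <- zip fs ss) p.1 p.2.

Lemma prodz_cons f fs s ss : prodz (f :: fs) (s :: ss) = f s * prodz fs ss.
Proof. by rewrite /prodz /= big_cons. Qed.

Lemma prodz_cat fs1 fs2 ss1 ss2 : size fs1 = size ss1 ->
  prodz (fs1 ++ fs2) (ss1 ++ ss2) = prodz fs1 ss1 * prodz fs2 ss2.
Proof. by move=> h; rewrite /prodz zip_cat // big_cat. Qed.

Lemma sum_indep (I : eqType) (F : I -> K) (s1 s2 : seq I) :
  uniq s1 -> uniq s2 -> (forall i, F i != 0 -> i \in s1) ->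
  (forall i, F i != 0 -> i \in s2) -> \sum_(i <- s1) F i = \sum_(i <- s2) F i.
Proof.
move=> u1 u2 c1 c2.
have E s : \sum_(i <- s) F i = \sum_(i <- [seq i <- s | F i != 0]) F i.
  rewrite big_filter [RHS]big_mkcond; apply: eq_bigr => i _ /=.
  by case: (eqVneq (F i) 0) => [->|].
rewrite E [RHS]E; apply: perm_big; apply: uniq_perm; rewrite ?filter_uniq // => i.
rewrite !mem_filter; case H: (F i != 0) => //=.
by rewrite c1 ?c2 // H.
Qed.

Lemma sum_nz (I : eqType) (F : I -> K) (s : seq I) :
  \sum_(i <- s) F i != 0 -> exists2 i, i \in s & F i != 0.
Proof.
move=> H; apply/hasP; apply: contraR H => /hasPn H.
by rewrite big1_seq // => i /H; rewrite negbK => /eqP.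
Qed.

Lemma prodz_supp fs ss n (A : seq ptree) : size fs = size ss -> prodz fs ss != 0 ->
  (forall f, List.In f fs -> forall S, f S != 0 -> (degx S <= n)%N -> S \in A) ->
  all (fun S => degx S <= n)%N ss -> all (fun S => S \in A) ss.
Proof.
elim: fs ss => [|f fs IH] [|S ss] //= [hs].
rewrite prodz_cons mulf_eq0 negb_or => /andP [h1 h2] hA /andP [d1 d2].
apply/andP; split; first by apply: (hA f) => //; left.
apply: IH => // f' hf'; apply: hA; by right.
Qed.

Lemma mprodE fs T (U : seq (seq ptree)) : uniq U ->
  (forall ss, size ss = size fs -> graft ss = T -> prodz fs ss != 0 -> ss \in U) ->
  mprod fs T = \sum_(ss <- U) (if (size ss == size fs) && (graft ss == T) then prodz fs ss else 0).
Proof.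
move=> uU cU; rewrite /mprod.
transitivity (\sum_(ss <- decomps (size fs) T)
   (if (size ss == size fs) && (graft ss == T) then prodz fs ss else 0)).
  by apply: eq_big_seq => ss; rewrite mem_decomps => ->.
apply: sum_indep => //; first exact: uniq_decomps.
  move=> ss; case: andP => [[h1 h2] _|]; last by rewrite eqxx.
  by rewrite mem_decomps h1 h2.
move=> ss; case: andP => [[/eqP h1 /eqP h2]|]; last by rewrite eqxx.
exact: cU.
Qed.

Lemma mprod_nz fs T : mprod fs T != 0 ->
  exists ss, [/\ size ss = size fs, graft ss = T & prodz fs ss != 0].
Proof.
by case/sum_nz => ss; rewrite mem_decomps => /andP [/eqP h1 /eqP h2] h3; exists ss.
Qed.

Lemma mprod0 T : mprod [::] T = one_s K T.
Proof.
rewrite (@mprodE _ _ [:: [::]]) //; last by case.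
rewrite big_cons big_nil addr0 /one_s /ind /= eq_sym.
by case: eqP => //= _; apply: big_nil.
Qed.

Lemma mprod1 f T : mprod [:: f] T = f T.
Proof.
rewrite (@mprodE _ _ [:: [:: T]]) //; last first.
  by case=> [|x [|]] //= _; rewrite graft1 => ->; rewrite inE.
rewrite big_cons big_nil addr0 graft1 eqxx /= prodz_cons.
by rewrite [prodz _ _]big_nil mulr1.
Qed.

Lemma graft_ins k ss : graft (take k ss ++ None :: drop k ss) = graft ss.
Proof. by rewrite /graft pmap_cat /= -pmap_cat cat_take_drop. Qed.

Lemma mprod_ins fs1 fs2 T : mprod (fs1 ++ one_s K :: fs2) T = mprod (fs1 ++ fs2) T.
Proof.
set k := size fs1; set m := size (fs1 ++ fs2).
pose ins (ss : seq ptree) := take k ss ++ None :: drop k ss.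
have hm : (k <= m)%N by rewrite /m size_cat leq_addr.
have szins (ss : seq ptree) : (k <= size ss)%N -> size (take k ss) = k by move=> h; rewrite size_takel.
rewrite (mprodE (U := map ins (decomps m T))); last first.
- move=> ss; rewrite size_cat /= addnS -size_cat -/m => hs hg hp.
  have hk : (k < size ss)%N by rewrite hs ltnS.
  have hd := drop_nth None hk.
  have hk' : (k <= size ss)%N := ltnW hk.
  have Ess : ss = take k ss ++ nth None ss k :: drop k.+1 ss by rewrite -hd cat_take_drop.
  move: hp; rewrite Ess prodz_cat ?szins // prodz_cons !mulf_eq0 !negb_or.
  case/and3P => _ hx _.
  have hx' : nth None ss k = None.
    by move: hx; rewrite /one_s /ind; case: (nth None ss k) => [t|] //=; rewrite mulr0n eqxx.
  have Eins : ss = ins (take k ss ++ drop k.+1 ss).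
    rewrite /ins take_size_cat ?szins // drop_size_cat ?szins //.
    by rewrite {1}Ess hx'.
  apply/mapP; exists (take k ss ++ drop k.+1 ss); last by rewrite -Ess.
  rewrite mem_decomps size_cat size_takel // size_drop.
  apply/andP; split.
    by apply/eqP; rewrite hs subSS subnKC.
  by apply/eqP; rewrite -hg [in RHS]Eins graft_ins.
- rewrite map_inj_in_uniq ?uniq_decomps // => s1 s2.
  rewrite !mem_decomps => /andP [/eqP h1 _] /andP [/eqP h2 _] E.
  have hk1 : (k <= size s1)%N by rewrite h1.
  have hk2 : (k <= size s2)%N by rewrite h2.
  have Et : take k s1 = take k s2.
    by move: (congr1 (take k) E); rewrite /ins !take_size_cat ?szins.
  have Ed : drop k s1 = drop k s2.
    have dr (s : seq ptree) : (k <= size s)%N -> drop k.+1 (ins s) = drop k s.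
      by move=> hs; rewrite /ins drop_cat szins // ltnNge leqnSn /= subSnn /= drop0.
    by rewrite -(dr _ hk1) -(dr _ hk2) E.
  by rewrite -(cat_take_drop k s1) Et Ed cat_take_drop.
rewrite big_map /mprod; apply: eq_big_seq => ss; rewrite mem_decomps => /andP [/eqP hs /eqP hg].
have hk : (k <= size ss)%N by rewrite hs.
rewrite /ins size_cat /= size_takel // size_drop graft_ins hg eqxx andbT.
have -> : (k + (size ss - k).+1)%N = size (fs1 ++ one_s K :: fs2).
  by rewrite size_cat /= hs /m size_cat -/k addKn.
rewrite eqxx prodz_cat ?szins // prodz_cons /one_s /ind eqxx mul1r.
by rewrite -prodz_cat ?szins // cat_take_drop.
Qed.

End Gen.

From Stdlib Require Import ClassicalEpsilon FunctionalExtensionality.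

Lemma inP (T : eqType) (x : T) (s : seq T) : List.In x s -> x \in s.
Proof. elim: s => //= y s IH [->|/IH]; rewrite inE ?eqxx // => ->; by rewrite orbT. Qed.

Lemma inP' (T : eqType) (x : T) (s : seq T) : x \in s -> List.In x s.
Proof. elim: s => //= y s IH; rewrite inE => /orP [/eqP ->|/IH]; by [left|right]. Qed.

Section Gen3.
Variable K : fieldType.
Implicit Types (f : ptree -> K) (fs : seq (ptree -> K)).

Lemma cover_ex f n : series f -> exists s, uniq s /\ forall S, f S != 0 -> (degx S <= n)%N -> S \in s.
Proof.
move=> sf; elim: n => [|n [s [us hs]]].
  case: (sf 0%N) => s hs; exists (undup s); split; first exact: undup_uniq.
  by move=> S h1 h2; rewrite mem_undup; apply: hs => //; apply/eqP; rewrite -leqn0.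
case: (sf n.+1) => s' hs'; exists (undup (s ++ s')); split; first exact: undup_uniq.
move=> S h1; rewrite leq_eqVlt ltnS mem_undup mem_cat => /orP [/eqP h2|h2].
  by rewrite hs' ?orbT.
by rewrite hs.
Qed.

Lemma cover_list fs n : (forall f, List.In f fs -> series f) ->
  exists A, uniq A /\ forall f, List.In f fs -> forall S, f S != 0 -> (degx S <= n)%N -> S \in A.
Proof.
elim: fs => [|f fs IH] H.
  by exists [::]; split => // f [].
case: (cover_ex n (H f (or_introl erefl))) => s [_ hs].
case: IH => [f' hf'|A [_ hA]]; first by apply: H; right.
exists (undup (s ++ A)); split; first exact: undup_uniq.
move=> f' [<-|hf'] S h1 h2; rewrite mem_undup mem_cat; first by rewrite hs.
by rewrite (hA f') ?orbT.
Qed.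

Lemma mprod_series fs : (forall f, List.In f fs -> series f) -> series (mprod fs).
Proof.
move=> H n; case: (cover_list n H) => A [uA hA].
exists (map graft (tuples_in A (size fs))) => T hT hd.
case: (mprod_nz hT) => ss [h1 h2 h3].
apply/mapP; exists ss => //.
rewrite mem_tuples_in h1 eqxx /=.
apply: (prodz_supp (n := n) (esym h1) h3 hA).
apply/allP => x hx; rewrite -hd -h2; exact: degx_le_graft.
Qed.

Lemma ind_series S0 : series (ind K S0).
Proof.
move=> n; exists [:: S0] => S; case: (eqVneq S S0) => [->|ne]; first by rewrite inE.
by rewrite /ind (negbTE ne) /= mulr0n eqxx.
Qed.

Lemma prodz_ind s0 ss : size ss = size s0 -> prodz (map (ind K) s0) ss != 0 -> ss = s0.
Proof.
elim: s0 ss => [|a s0 IH] [|b ss] //= [hs]; rewrite prodz_cons mulf_eq0 negb_or.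
case/andP => h1 h2; move: h1; case: (eqVneq b a) => [-> _|ne]; last by rewrite /ind (negbTE ne) /= mulr0n eqxx.
by rewrite (IH _ hs h2).
Qed.

Lemma prodz_ind_self s0 : prodz (map (ind K) s0) s0 = 1.
Proof.
elim: s0 => [|a s0 IH] /=; first exact: big_nil.
by rewrite prodz_cons IH /ind eqxx mulr1.
Qed.

Lemma mprod_ind s0 T : mprod (map (ind K) s0) T = ind K (graft s0) T.
Proof.
rewrite (mprodE (U := [:: s0])) //; last first.
  by move=> ss; rewrite size_map => hs _ /(prodz_ind hs) ->; rewrite inE.
rewrite big_cons big_nil addr0 size_map eqxx /= prodz_ind_self /ind eq_sym.
by case: eqP.
Qed.

End Gen3.

Section Hom.
Variables (K : fieldType) (g h : ptree -> K).
Hypotheses (sg : series g) (sh : series h) (og : ordx_ge g 1).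
Implicit Types (f : ptree -> K) (fs : seq (ptree -> K)).

Fixpoint Pt (t : ltree) : ptree -> K :=
  match t with
  | LLeaf X => g
  | LLeaf Y => h
  | LNode a b ts => mprod (Pt a :: Pt b :: map Pt ts)
  end.

Definition P (S : ptree) : ptree -> K := if S is Some t then Pt t else one_s K.

Lemma ltree_ind' (Q : ltree -> Prop) : (forall l, Q (LLeaf l)) ->
  (forall a b ts, Q a -> Q b -> (forall t, t \in ts -> Q t) -> Q (LNode a b ts)) ->
  forall t, Q t.
Proof.
move=> HL HN; fix IH 1; case=> [l|a b ts]; first exact: HL.
apply: HN; try exact: IH.
have F : List.Forall Q ts.
  by elim: ts => [|t ts IHts]; constructor; [exact: IH | exact: IHts].
move=> t /inP'; exact: (proj1 (List.Forall_forall Q ts) F t).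
Qed.

Lemma prodz_deg (cs : seq ltree) (F : ltree -> ptree -> K) ss :
  (forall c, c \in cs -> forall T, F c T != 0 -> (degx_tree c <= degx T)%N) ->
  size ss = size cs -> prodz (map F cs) ss != 0 ->
  (sumn (map degx_tree cs) <= sumn (map degx ss))%N.
Proof.
elim: cs ss => [|c cs IH] [|S ss] //= H [hs]; rewrite prodz_cons mulf_eq0 negb_or.
case/andP => h1 h2; apply: leq_add; first by apply: (H c) => //; rewrite inE eqxx.
by apply: IH => // c' hc'; apply: H; rewrite inE hc' orbT.
Qed.

Lemma ordP S T : P S T != 0 -> (degx S <= degx T)%N.
Proof.
case: S => [t|] /=; last by [].
elim/ltree_ind': t T => [[|]|a b ts IHa IHb IHts] T //=.
  by move/og.
case/mprod_nz => ss [hs hg hp].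
have hs' : size ss = size [:: a, b & ts] by rewrite hs /= size_map.
have := prodz_deg (cs := [:: a, b & ts]) (F := Pt) _ hs' hp.
rewrite -hg degx_graft /= -addnA; apply => c; rewrite !inE => /orP [/eqP ->|/orP [/eqP ->|]] //.
exact: IHts.
Qed.

Lemma seriesP S : series (P S).
Proof.
case: S => [t|] /=; last exact: ind_series.
elim/ltree_ind': t => [[|]|a b ts IHa IHb IHts] //=.
apply: mprod_series => f /= [<-|[<-|]] //.
by case/List.in_map_iff => t [<- /inP]; apply: IHts.
Qed.

Lemma mprod_drop fs1 ss T :
  mprod (fs1 ++ map P ss) T = mprod (fs1 ++ map P (map Some (pmap id ss))) T.
Proof.
elim: ss fs1 => [|[t|] ss IH] fs1 //=.
  by rewrite -!cat_rcons IH.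
by rewrite mprod_ins IH.
Qed.

Lemma KP ss T : mprod (map P ss) T = P (graft ss) T.
Proof.
have := mprod_drop [::] ss T; rewrite /= => ->.
rewrite /graft; case: (pmap id ss) => [|a [|b ts]] /=.
- exact: mprod0.
- exact: mprod1.
- by rewrite -map_comp (@eq_map _ _ (P \o Some) Pt (fun=> erefl)).
Qed.

Definition covers f n (s : seq ptree) :=
  uniq s /\ forall S, f S != 0 -> (degx S <= n)%N -> S \in s.
Definition Lc f n := epsilon (inhabits [::]) (covers f n).
Definition phi f : ptree -> K := fun T => \sum_(S <- Lc f (degx T)) f S * P S T.

Lemma Lc_spec f n : series f -> covers f n (Lc f n).
Proof. move=> sf; apply: epsilon_spec; exact: cover_ex. Qed.

Lemma phiE f T s : series f -> uniq s ->
  (forall S, f S != 0 -> (degx S <= degx T)%N -> S \in s) ->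
  phi f T = \sum_(S <- s) f S * P S T.
Proof.
move=> sf us hs; case: (Lc_spec (degx T) sf) => u hu.
apply: sum_indep => // S; rewrite mulf_eq0 negb_or => /andP [h1 h2];
  [apply: hu|apply: hs] => //; exact: ordP h2.
Qed.

Lemma phi_ind S0 : phi (ind K S0) = P S0.
Proof.
apply: functional_extensionality => T.
rewrite (phiE (s := [:: S0]) (@ind_series K S0)) //; last first.
  move=> S; case: (eqVneq S S0) => [->|ne]; first by rewrite inE.
  by rewrite /ind (negbTE ne) /= mulr0n eqxx.
by rewrite big_cons big_nil addr0 /ind eqxx mul1r.
Qed.


Lemma lincomb_series a f1 f2 : series f1 -> series f2 -> series (lincomb a f1 f2).
Proof.
move=> s1 s2 n; case: (s1 n) => u1 h1; case: (s2 n) => u2 h2.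
exists (u1 ++ u2) => S hS hd; rewrite mem_cat.
have: (f1 S != 0) || (f2 S != 0).
  apply: contraR hS; rewrite negb_or !negbK => /andP [/eqP E1 /eqP E2].
  by rewrite /lincomb E1 E2 mulr0 addr0.
case/orP => H; [by rewrite (h1 _ H hd) | by rewrite (h2 _ H hd) orbT].
Qed.

Lemma phi_lin a f1 f2 : series f1 -> series f2 ->
  phi (lincomb a f1 f2) = lincomb a (phi f1) (phi f2).
Proof.
move=> s1 s2; apply: functional_extensionality => T.
case: (Lc_spec (degx T) s1) => _ c1; case: (Lc_spec (degx T) s2) => _ c2.
set s := undup (Lc f1 (degx T) ++ Lc f2 (degx T)).
have us : uniq s := undup_uniq _.
have E1 : phi f1 T = \sum_(S <- s) f1 S * P S T.
  by apply: phiE => // S H hd; rewrite mem_undup mem_cat c1.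
have E2 : phi f2 T = \sum_(S <- s) f2 S * P S T.
  by apply: phiE => // S H hd; rewrite mem_undup mem_cat c2 ?orbT.
rewrite (phiE (s := s) (lincomb_series a s1 s2) us); last first.
  move=> S hS hd; rewrite mem_undup mem_cat.
  have: (f1 S != 0) || (f2 S != 0).
    apply: contraR hS; rewrite negb_or !negbK => /andP [/eqP F1 /eqP F2].
    by rewrite /lincomb F1 F2 mulr0 addr0.
  case/orP => H; [by rewrite c1 | by rewrite c2 ?orbT].
rewrite /lincomb E1 E2 mulr_sumr -big_split /=; apply: eq_bigr => S _.
by rewrite mulrDl mulrA.
Qed.

Lemma phi_series f : series f -> series (phi f).
Proof.
move=> sf n.
have [B HB] : exists B : seq ptree, forall S, S \in Lc f n -> forall T, P S T != 0 -> degx T = n -> T \in B.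
  elim: (Lc f n) => [|S0 s [B HB]]; first by exists [::].
  case: (seriesP S0 n) => B0 H0; exists (B0 ++ B) => S.
  rewrite inE => /orP [/eqP -> T hT hd|hS T hT hd]; rewrite mem_cat.
    by rewrite (H0 _ hT hd).
  by rewrite (HB _ hS _ hT hd) orbT.
exists B => T hT hd; move: hT; rewrite /phi hd => /sum_nz [S hS].
rewrite mulf_eq0 negb_or => /andP [_ hP]; exact: HB hS T hP hd.
Qed.

Lemma phi_cont : xadic_continuous phi.
Proof.
move=> f sf n; exists n => g' sg' hd T hne; rewrite leqNgt; apply/negP => hlt.
move: hne; rewrite /sub_s.
case: (Lc_spec (degx T) sf) => _ c1; case: (Lc_spec (degx T) sg') => _ c2.
set s := undup (Lc g' (degx T) ++ Lc f (degx T)).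
have us : uniq s := undup_uniq _.
rewrite (phiE (s := s) sg' us); last by move=> S H d; rewrite mem_undup mem_cat c2.
rewrite (phiE (s := s) sf us); last by move=> S H d; rewrite mem_undup mem_cat c1 ?orbT.
rewrite -sumrB big1 ?eqxx // => S _.
case: (eqVneq (P S T) 0) => [->|hP]; first by rewrite !mulr0 subrr.
rewrite -mulrBl; have: g' S - f S == 0.
  apply: contraTT hlt => H; rewrite -leqNgt; exact: leq_trans (hd S H) (ordP hP).
by move/eqP => ->; rewrite mul0r.
Qed.

Lemma prod_sum fs tt A n : (forall f, List.In f fs -> series f) -> uniq A ->
  (forall f, List.In f fs -> forall S, f S != 0 -> (degx S <= n)%N -> S \in A) ->
  size tt = size fs -> all (fun t => degx t <= n)%N tt ->
  prodz (map phi fs) tt =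
  \sum_(ss <- tuples_in A (size fs)) prodz fs ss * prodz (map P ss) tt.
Proof.
elim: fs tt => [|f fs IH] [|t tt] //= Hs uA hA.
  by move=> _ _; rewrite big_cons big_nil addr0 /prodz /= !big_nil mulr1.
case=> hsz /andP [ht htt].
rewrite prodz_cons (phiE (s := A)) //; first last.
- move=> S H d; apply: (hA f) => //; first by left.
  exact: leq_trans d ht.
- by apply: Hs; left.
rewrite (IH tt) //; first last.
- by move=> f' hf' S H d; apply: (hA f') => //; right.
- by move=> f' hf'; apply: Hs; right.
rewrite big_allpairs_dep mulr_suml; apply: eq_bigr => S _.
rewrite mulr_sumr; apply: eq_bigr => ss _.
by rewrite prodz_cons /= prodz_cons mulrACA.
Qed.

Lemma In_map (A B : Type) (F : A -> B) x (s : seq A) : List.In x (map F s) -> exists y, F y = x.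
Proof. elim: s => //= y s IH [<-|/IH //]; by exists y. Qed.

Lemma phi_mprod fs : (forall f, List.In f fs -> series f) ->
  phi (mprod fs) = mprod (map phi fs).
Proof.
move=> Hs; apply: functional_extensionality => T.
set n := degx T; set m := size fs.
case: (cover_list n Hs) => A [uA hA].
set U := tuples_in A m.
have uU : uniq U := uniq_tuples_in m uA.
pose H ss := prodz fs ss * P (graft ss) T.
have inU ss : size ss = m -> prodz fs ss != 0 -> (degx (graft ss) <= n)%N -> ss \in U.
  move=> h1 h3 hd; rewrite mem_tuples_in h1 eqxx /=.
  apply: (prodz_supp (n := n) (esym h1) h3 hA).
  apply/allP => x hx; apply: leq_trans hd; exact: degx_le_graft.
have R : mprod (map phi fs) T = \sum_(ss <- U) H ss.
  rewrite /mprod size_map -/m.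
  transitivity (\sum_(tt <- decomps m T) \sum_(ss <- U) prodz fs ss * prodz (map P ss) tt).
    apply: eq_big_seq => tt; rewrite mem_decomps => /andP [/eqP htt /eqP hg].
    apply: (prod_sum (n := n)) => //.
    apply/allP => x hx; rewrite /n -hg; exact: degx_le_graft.
  rewrite exchange_big /=; apply: eq_big_seq => ss hss.
  rewrite -mulr_sumr /H -KP; congr (_ * _).
  rewrite /mprod size_map; move: hss; rewrite mem_tuples_in => /andP [/eqP -> _] //.
rewrite R.
pose s := undup (map graft U).
rewrite (phiE (s := s)); first last.
- move=> S hS hd; case: (mprod_nz hS) => ss [h1 h2 h3].
  rewrite mem_undup; apply/mapP; exists ss => //.
  by apply: inU => //; rewrite h2.
- exact: undup_uniq.
- exact: mprod_series.
transitivity (\sum_(S <- s) \sum_(ss <- U) (if graft ss == S then H ss else 0)).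
  apply: eq_bigr => S _.
  case: (eqVneq (P S T) 0) => hP.
    rewrite hP mulr0 big1 // => ss _; case: eqP => // E.
    by rewrite /H E hP mulr0.
  have hdS := ordP hP.
  rewrite (mprodE (U := U)) //; last first.
    move=> ss h1 h2 h3; apply: inU => //; by rewrite h2.
  rewrite mulr_suml; apply: eq_big_seq => ss hss.
  move: (hss); rewrite mem_tuples_in => /andP [/eqP -> _]; rewrite eqxx /=.
  case: eqP => [<-|]; by rewrite ?mul0r.
rewrite exchange_big /=; apply: eq_big_seq => ss hss.
rewrite (sum_indep (s2 := [:: graft ss])) ?big_seq1 ?eqxx //.
- exact: undup_uniq.
- move=> S; case: (eqVneq (graft ss) S) => [<- _|_]; last by rewrite eqxx.
  by rewrite mem_undup map_f.
- move=> S; case: (eqVneq (graft ss) S) => [<- _|_]; last by rewrite eqxx.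
  by rewrite inE.
Qed.

Lemma psi_unique psi : is_hom_gh psi g h -> forall f, series f -> psi f = phi f.
Proof.
case=> _ [Hlin [H1 [Hm [Hx [Hy Hc]]]]] f sf.
pose z : ptree -> K := fun _ => 0.
have sz : series z by move=> n; exists [::] => S; rewrite eqxx.
have pz : psi z = z.
  have E := Hlin (-1) z z sz sz.
  have Ez : lincomb (-1) z z = z.
    by apply: functional_extensionality => S; rewrite /lincomb mulr0 addr0.
  rewrite Ez in E; apply: functional_extensionality => S.
  have := congr1 (fun F => F S) E; rewrite /lincomb /= mulN1r addNr => ->.
  by [].
have pind S : psi (ind K S) = P S.
  case: S => [t|]; last exact: H1.
  elim/ltree_ind': t => [[|]|a b ts IHa IHb IHts]; [exact: Hx|exact: Hy|].
  have E : ind K (Some (LNode a b ts)) = mprod (map (ind K) (map Some [:: a, b & ts])).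
    apply: functional_extensionality => T; by rewrite mprod_ind graft_some.
  rewrite E Hm; first last.
  - move=> f' Hf; case: (In_map Hf) => c <-; exact: ind_series.
  - by [].
  have EM : map psi (map (ind K) (map Some [:: a, b & ts])) = map P (map Some [:: a, b & ts]).
    rewrite -!map_comp; apply/eq_in_map => c; rewrite !inE => /orP [/eqP -> //|/orP [/eqP -> //|hc]].
    exact: IHts.
  rewrite EM; apply: functional_extensionality => T.
  by rewrite KP graft_some.
pose trs (s : seq ptree) : ptree -> K := fun S => if S \in s then f S else 0.
have strs s : series (trs s).
  move=> n; exists s => S; rewrite /trs; case: ifP => // _; by rewrite eqxx.
have ptrs s : uniq s -> psi (trs s) = fun T => \sum_(S <- s) f S * P S T.
  elim: s => [|a s IH] /=.
    move=> _; have -> : trs [::] = z by apply: functional_extensionality.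
    by rewrite pz; apply: functional_extensionality => T; rewrite big_nil.
  case/andP => ha us.
  have -> : trs (a :: s) = lincomb (f a) (ind K a) (trs s).
    apply: functional_extensionality => S; rewrite /trs /lincomb /ind inE.
    case: (eqVneq S a) => [->|ne] /=; first by rewrite (negbTE ha) mulr1 addr0.
    by rewrite mulr0 add0r.
  rewrite Hlin; [|exact: ind_series|exact: strs].
  rewrite pind IH //.
  by apply: functional_extensionality => T; rewrite /lincomb big_cons.
apply: functional_extensionality => T.
case: (Hc f sf (degx T).+1) => m Hm'.
case: (cover_ex (maxn m (degx T)) sf) => s [us hs].
have hord : ordx_ge (sub_s (trs s) f) m.
  move=> S; rewrite /sub_s /trs; case: ifP => hin; first by rewrite subrr eqxx.
  rewrite sub0r oppr_eq0 => hfS; rewrite leqNgt; apply/negP => hlt.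
  have := hs S hfS (leq_trans (ltnW hlt) (leq_maxl _ _)); by rewrite hin.
have E : psi (trs s) T = psi f T.
  apply/eqP; rewrite -subr_eq0; case: (eqVneq (psi (trs s) T - psi f T) 0) => // hne.
  by have := Hm' _ (strs s) hord T hne; rewrite ltnn.
rewrite -E ptrs // (phiE (s := s)) // => S hS hd.
exact: hs (leq_trans hd (leq_maxr _ _)).
Qed.

End Hom.

Theorem proposition3p1 (K : fieldType) (g h : ptree -> K) :
  series g -> series h -> ordx_ge g 1 ->
  exists phi : (ptree -> K) -> (ptree -> K),
    is_hom_gh phi g h /\
    (forall psi : (ptree -> K) -> (ptree -> K), is_hom_gh psi g h ->
       forall f, series f -> psi f = phi f).
Proof.
move=> sg sh og; exists (phi g h); split; last exact: (psi_unique og).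
split; first exact: (phi_series sg sh).
split; first exact: (phi_lin h og).
split; first exact: (phi_ind h og None).
split; first by move=> fs _ Hs; apply: (phi_mprod h og).
split; first exact: (phi_ind h og (Some (LLeaf X))).
split; first exact: (phi_ind h og (Some (LLeaf Y))).
exact: (phi_cont h og).
Qed.
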